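(* Let $\mathfrak S=(S,\xrightarrow{F},\le)$ be a complete functional transition system and $s_0\in S$. Let $g_1,\dots,g_n\in F$, and assume $g_n^\infty(\cdots g_2^\infty(g_1^\infty(s_0))\cdots)$ is defined and lies in some Scott-open subset $U$ of $S$. Then there are natural numbers $k_1,\dots,k_n$ such that $g_n^{k_n}(\cdots g_2^{k_2}(g_1^{k_1}(s_0))\cdots)$ is defined and lies in $U$.
   Context: Complete functional transition system: $(S,\le)$ a well partial order which is a continuous dcpo; $F$ a finite set of partial continuous maps (domain Scott-open; $f(\bigvee D)=\bigvee f(D)$ for directed $D\subseteq\operatorname{dom}f$). Scott-open: upward-closed $U$ such that any directed $D$ with $\bigvee D\in U$ meets $U$. Lub-acceleration of a partial continuous $g$: $\operatorname{dom}g^\infty=\operatorname{dom}g$ and $g^\infty(x)=\bigvee_{n\in\mathbb N}g^n(x)$ if $x<g(x)$, $g^\infty(x)=g(x)$ otherwise. *)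

(* Defs.v *)
From Stdlib Require Import List.
Import ListNotations.
Set Implicit Arguments.

Section Defs.
Variable T : Type.
Variable le : T -> T -> Prop.

Definition lt (x y : T) : Prop := le x y /\ x <> y.

Definition partial_order : Prop :=
  (forall x, le x x) /\
  (forall x y, le x y -> le y x -> x = y) /\
  (forall x y z, le x y -> le y z -> le x z).

Definition wpo : Prop :=
  partial_order /\
  forall f : nat -> T, exists i j, i < j /\ le (f i) (f j).

Definition directed (D : T -> Prop) : Prop :=
  (exists d, D d) /\
  forall x y, D x -> D y -> exists z, D z /\ le x z /\ le y z.

Definition is_lub (D : T -> Prop) (s : T) : Prop :=
  (forall d, D d -> le d s) /\
  (forall u, (forall d, D d -> le d u) -> le s u).

Definition dcpo : Prop :=
  partial_order /\ forall D, directed D -> exists s, is_lub D s.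

Definition way_below (x y : T) : Prop :=
  forall D s, directed D -> is_lub D s -> le y s -> exists d, D d /\ le x d.

Definition continuous_dcpo : Prop :=
  dcpo /\
  forall x, directed (fun y => way_below y x) /\ is_lub (fun y => way_below y x) x.

Definition upward_closed (U : T -> Prop) : Prop :=
  forall x y, U x -> le x y -> U y.

Definition scott_open (U : T -> Prop) : Prop :=
  upward_closed U /\
  forall D s, directed D -> is_lub D s -> U s -> exists d, D d /\ U d.

(* Partial maps are modelled as T -> option T; dom g = {x | g x <> None}. *)
Definition dom (g : T -> option T) (x : T) : Prop := g x <> None.

Definition partial_continuous (g : T -> option T) : Prop :=
  scott_open (dom g) /\
  forall D s, directed D -> (forall d, D d -> dom g d) -> is_lub D s ->
    exists t, g s = Some t /\
      is_lub (fun y => exists d, D d /\ g d = Some y) t.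

(* Complete functional transition system (S, F, <=), F finite (a list). *)
Definition complete_FTS (F : list (T -> option T)) : Prop :=
  wpo /\ continuous_dcpo /\ forall g, In g F -> partial_continuous g.

Fixpoint iterp (g : T -> option T) (n : nat) (x : T) : option T :=
  match n with
  | O => Some x
  | S n' => match iterp g n' x with Some y => g y | None => None end
  end.

(* Lub-acceleration as a (functional) relation: accel g x y  <->  g^oo(x) = y.
   dom g^oo = dom g; g^oo(x) = \/_n g^n(x) if x < g(x), g(x) otherwise. *)
Definition accel (g : T -> option T) (x y : T) : Prop :=
  dom g x /\
  ((exists gx, g x = Some gx /\ lt x gx) ->
      is_lub (fun z => exists n, iterp g n x = Some z) y) /\
  (~ (exists gx, g x = Some gx /\ lt x gx) -> g x = Some y).

(* accel_seq [g1;...;gn] x y  <->  g_n^oo(... g_1^oo(x) ...) is defined and = y *)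
Fixpoint accel_seq (gs : list (T -> option T)) (x y : T) : Prop :=
  match gs with
  | [] => y = x
  | g :: gs' => exists z, accel g x z /\ accel_seq gs' z y
  end.

Fixpoint iter_seq (gs : list (T -> option T)) (ks : list nat) (x : T)
  : option T :=
  match gs, ks with
  | g :: gs', k :: ks' =>
      match iterp g k x with Some z => iter_seq gs' ks' z | None => None end
  | _, _ => Some x
  end.
End Defs.

(* Main.v *)
Require Import Defs.
From Stdlib Require Import List Classical Arith Lia.
Set Implicit Arguments.

Lemma mono (S : Type) (le : S -> S -> Prop) (Hpo : partial_order le)
  (g : S -> option S) (Hg : partial_continuous le g) {x y t} :
  le x y -> g x = Some t -> exists t', g y = Some t' /\ le t t'.
Proof.
 destruct Hpo as [Hr [Ha Ht]]. destruct Hg as [[Hdu _] Hc].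
 intros Hxy Hgx.
 destruct (Hc (fun d => d = x \/ d = y) y) as [t' [Hy Hl]].
 - split. exists x; auto. intros a b Ha' Hb'. exists y. split; [auto|].
   destruct Ha' as [-> | ->], Hb' as [-> | ->]; auto.
 - intros d [-> | ->]. unfold dom; congruence. apply (Hdu x y); [unfold dom; congruence|auto].
 - split. intros d [-> | ->]; auto. intros u Hu. apply Hu; auto.
 - exists t'. split; auto. apply Hl. exists x. auto.
Qed.

Lemma open_ext (S : Type) (le : S -> S -> Prop) (A B : S -> Prop) :
  (forall x, A x <-> B x) -> scott_open le A -> scott_open le B.
Proof.
  intros E [H1 H2]. split.
  - intros x y Bx Hxy. apply E. apply (H1 x y); [apply E|]; auto.
  - intros D s HD Hs Bs. destruct (H2 D s HD Hs (proj2 (E s) Bs)) as [d [Dd Ad]].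
    exists d. split; auto. apply E; auto.
Qed.

Lemma pre_open (S : Type) (le : S -> S -> Prop) (Hpo : partial_order le)
  (g : S -> option S) (Hg : partial_continuous le g) (U : S -> Prop)
  (HU : scott_open le U) :
  scott_open le (fun x => exists t, g x = Some t /\ U t).
Proof.
 pose proof Hpo as [Hr [Ha Ht]].
 split.
 - intros x y [t [Hx Ut]] Hxy. destruct (mono Hpo Hg Hxy Hx) as [t' [Hy' Htt]].
   exists t'; split; auto. apply (proj1 HU t t'); auto.
 - intros D s HD Hs [t [Hgs Ut]].
   pose proof Hg as [[Hdu Hdo] Hc].
   assert (Hds: dom g s) by (unfold dom; congruence).
   destruct (Hdo D s HD Hs Hds) as [d0 [HDd0 Hd0]].
   pose (D' := fun d => D d /\ le d0 d).
   assert (HD': directed le D').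
   { split. exists d0; split; auto.
     intros a b [Da Ha'] [Db Hb]. destruct (proj2 HD a b Da Db) as [z [Dz [Haz Hbz]]].
     exists z. repeat split; auto. eapply Ht; eauto. }
   assert (Hs': is_lub le D' s).
   { split. intros d [Dd _]. apply (proj1 Hs); auto.
     intros u Hu. apply (proj2 Hs). intros d Dd.
     destruct (proj2 HD d d0 Dd HDd0) as [z [Dz [Hdz Hd0z]]].
     eapply Ht. exact Hdz. apply Hu. split; auto. }
   assert (Hdom': forall d, D' d -> dom g d). { intros d [_ H]. exact (Hdu d0 d Hd0 H). }
   destruct (Hc D' s HD' Hdom' Hs') as [t' [Hgs' Hl]]. rewrite Hgs in Hgs'; injection Hgs' as <-.
   pose (E := fun y => exists d, D' d /\ g d = Some y).
   assert (HE: directed le E).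
   { split. destruct (g d0) as [t0|] eqn:E0. exists t0. exists d0. split; [split; auto|auto].
     exfalso; apply Hd0; auto.
     intros a b [da [Da Ga]] [db [Db Gb]]. destruct (proj2 HD' da db Da Db) as [z [Dz [Haz Hbz]]].
     destruct (mono Hpo Hg Haz Ga) as [tz [Gz Hatz]]. destruct (mono Hpo Hg Hbz Gb) as [tz' [Gz' Hbtz]].
     rewrite Gz in Gz'; injection Gz' as <-. exists tz. split. exists z; auto. auto. }
   destruct (proj2 HU E t HE Hl Ut) as [e [[d [[Dd _] Gd]] Ue]]. exists d. split; auto. exists e; auto.
Qed.

Lemma iterp_open (S : Type) (le : S -> S -> Prop) (Hpo : partial_order le)
  (g : S -> option S) (Hg : partial_continuous le g) k : forall (U : S -> Prop),
  scott_open le U -> scott_open le (fun x => exists t, iterp g k x = Some t /\ U t).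
Proof.
  induction k; intros U HU.
  - eapply open_ext; [|exact HU]. intros x; simpl; split.
    + intros; exists x; auto.
    + intros [t [H1 H2]]; injection H1 as <-; auto.
  - eapply open_ext; [|exact (IHk _ (pre_open Hpo Hg HU))].
    intros x; simpl. destruct (iterp g k x) as [y|]; split.
    + intros [t [H1 [t' [H2 H3]]]]. injection H1 as <-. eauto.
    + intros [t [H1 H2]]. eauto.
    + intros [t [H1 _]]; discriminate.
    + intros [t [H1 _]]; discriminate.
Qed.

Lemma iter_seq_open (S : Type) (le : S -> S -> Prop) (Hpo : partial_order le) gs :
  (forall g, In g gs -> partial_continuous le g) -> forall ks (U : S -> Prop),
  scott_open le U -> scott_open le (fun x => exists w, iter_seq gs ks x = Some w /\ U w).
Proof.
  induction gs as [|g gs IH]; intros Hc ks U HU.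
  - eapply open_ext; [|exact HU]. intros x; simpl; split.
    + intros; exists x; auto.
    + intros [t [H1 H2]]; injection H1 as <-; auto.
  - destruct ks as [|k ks].
    + eapply open_ext; [|exact HU]. intros x; simpl; split.
      * intros; exists x; auto.
      * intros [t [H1 H2]]; injection H1 as <-; auto.
    + assert (Hg: partial_continuous le g) by (apply Hc; simpl; auto).
      assert (Hc': forall g, In g gs -> partial_continuous le g) by (intros; apply Hc; simpl; auto).
      eapply open_ext; [|exact (iterp_open Hpo Hg k (IH Hc' ks U HU))].
      intros x; simpl. destruct (iterp g k x) as [y|]; split.
      * intros [t [H1 H2]]. injection H1 as <-. auto.
      * intros H. eauto.
      * intros [t [H1 _]]; discriminate.
      * intros [t [H1 _]]; discriminate.
Qed.

Lemma union_open (S : Type) (le : S -> S -> Prop) (Hpo : partial_order le) gs :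
  (forall g, In g gs -> partial_continuous le g) -> forall (U : S -> Prop),
  scott_open le U -> scott_open le (fun x => exists ks : list nat, length ks = length gs /\
      exists w, iter_seq gs ks x = Some w /\ U w).
Proof.
  intros Hc U HU. split.
  - intros x y [ks [Hl Hx]] Hxy. exists ks. split; auto.
    exact (proj1 (iter_seq_open Hpo _ Hc ks HU) x y Hx Hxy).
  - intros D s HD Hs [ks [Hl Hx]].
    destruct (proj2 (iter_seq_open Hpo _ Hc ks HU) D s HD Hs Hx) as [d [Dd Hd]].
    exists d. split; auto. exists ks; auto.
Qed.

Lemma accel_step (S : Type) (le : S -> S -> Prop) (Hpo : partial_order le)
  (g : S -> option S) (Hg : partial_continuous le g) (V : S -> Prop)
  (HV : scott_open le V) x z :
  accel le g x z -> V z -> exists k w, iterp g k x = Some w /\ V w.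
Proof.
  pose proof Hpo as [Hr [Ha Ht]].
  intros [Hd [H1 H2]] Vz.
  destruct (classic (exists gx, g x = Some gx /\ lt le x gx)) as [Hlt|Hn].
  - specialize (H1 Hlt). destruct Hlt as [gx [Hgx [Hxg _]]].
    assert (Hch: forall n, exists a b, iterp g n x = Some a /\ g a = Some b /\ le a b).
    { induction n as [|n [a [b [Ha1 [Ha2 Ha3]]]]].
      - exists x, gx; simpl; auto.
      - destruct (mono Hpo Hg Ha3 Ha2) as [b' [Hb1 Hb2]].
        exists b, b'. simpl. rewrite Ha1. auto. }
    assert (Hmon: forall m n, exists a b, iterp g n x = Some a /\ iterp g (n+m) x = Some b /\ le a b).
    { induction m as [|m IH]; intros n.
      - destruct (Hch n) as [a [b [Ha1 _]]]. exists a, a. rewrite Nat.add_0_r. auto.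
      - destruct (IH n) as [a [b [Ha1 [Hb1 Hab]]]].
        destruct (Hch (n+m)) as [a' [b' [Ha1' [Ha2' Ha3']]]].
        rewrite Hb1 in Ha1'. injection Ha1' as <-.
        exists a, b'. rewrite <- plus_n_Sm. simpl. rewrite Hb1. split; auto. split; auto.
        eapply Ht; eauto. }
    assert (HD: directed le (fun z => exists n, iterp g n x = Some z)).
    { split. exists x, 0; auto.
      intros a b [n Hn] [m Hm].
      destruct (le_ge_dec n m) as [Hnm|Hnm].
      - destruct (Hmon (m-n) n) as [a' [b' [E1 [E2 E3]]]].
        replace (n + (m-n)) with m in E2 by lia.
        rewrite Hn in E1; injection E1 as <-. rewrite Hm in E2; injection E2 as <-.
        exists b. split; eauto.
      - destruct (Hmon (n-m) m) as [a' [b' [E1 [E2 E3]]]].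
        replace (m + (n-m)) with n in E2 by lia.
        rewrite Hm in E1; injection E1 as <-. rewrite Hn in E2; injection E2 as <-.
        exists a. split; eauto. }
    destruct (proj2 HV _ z HD H1 Vz) as [d [[n Hn] Vd]].
    exists n, d. auto.
  - specialize (H2 Hn). exists 1, z. simpl. auto.
Qed.

Unset Implicit Arguments.
Theorem lemma5p17 (S : Type) (le : S -> S -> Prop)
  (F : list (S -> option S)) (s0 : S)
  (HF : complete_FTS le F)
  (gs : list (S -> option S)) (Hgs : forall g, In g gs -> In g F)
  (U : S -> Prop) (HU : scott_open le U)
  (y : S) (Hy : accel_seq le gs s0 y) (HyU : U y) :
  exists ks : list nat, length ks = length gs /\
    exists z, iter_seq gs ks s0 = Some z /\ U z.
Proof.
  destruct HF as [[Hpo _] [_ HFc]].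
  assert (Hc: forall g, In g gs -> partial_continuous le g) by auto.
  clear Hgs.
  revert s0 Hy. induction gs as [|g gs IH]; intros s0 Hy.
  - simpl in Hy. subst. exists nil. split; auto. exists s0; auto.
  - destruct Hy as [z [Hacc Hz]].
    assert (Hg: partial_continuous le g) by (apply Hc; simpl; auto).
    assert (Hc': forall g, In g gs -> partial_continuous le g) by (intros; apply Hc; simpl; auto).
    specialize (IH Hc' z Hz).
    destruct (accel_step Hpo Hg (V:=_) (union_open Hpo _ Hc' HU) Hacc IH)
      as [k [w [Hw [ks [Hl [w' [Hw' Uw']]]]]]].
    exists (k :: ks). split. simpl; auto.
    exists w'. simpl. rewrite Hw. auto.
Qed.
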